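(* Let $V$ be a real vector space of finite even dimension with nondegenerate quadratic form $Q$. Let $\rho$ be a $c$-compatible representation of $\mathbb{C}l(V)$ on a finite-dimensional complex vector space $K$ with nondegenerate hermitian form $(\cdot,\cdot)$. Let $\sigma=\mathrm{Ad}_b\circ c$ be an admissible real structure with $b$ in the complex Clifford group and $b$ real, i.e. $c(b)=b$. (1) If $b^\times=b$, then $(\cdot,\cdot)_b:=(\cdot,\rho(b)^{-1}\cdot)$ is a $\sigma$-compatible Krein product on $K$. (2) If $b^\times=-b$, then $(\cdot,\cdot)_b:=(\cdot,i\rho(b)^{-1}\cdot)$ is a $\sigma$-compatible Krein product on $K$.
   Context: $Cl(V,Q)$ is the real Clifford algebra with $v^2=+Q(v)$, $\mathbb{C}l(V)$ its complexification with complex conjugation $c$; $T$ is the linear antiautomorphism restricting to the identity on $V$; $a^\times=c(T(a))$. A real structure is an involutive antilinear algebra automorphism of $\mathbb{C}l(V)$ stabilizing $V^{\mathbb{C}}$; admissible means commuting with $c$; $\mathrm{Ad}_b(a)=bab^{-1}$; the complex Clifford group is the set of invertible $g$ with $gV^{\mathbb{C}}g^{-1}\subset V^{\mathbb{C}}$. For a real structure $\sigma$, $a^{\times_\sigma}=\sigma(T(a))$. $\rho$ is $c$-compatible if $(\rho(a)\psi,\phi)=(\psi,\rho(a^\times)\phi)$ for all $a,\psi,\phi$. A Krein product is a nondegenerate hermitian form; it is $\sigma$-compatible if $(\rho(a)\psi,\phi)'=(\psi,\rho(a^{\times_\sigma})\phi)'$ for all $a\in\mathbb{C}l(V)$, $\psi,\phi\in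 K$. *)

(* Defs.v *)
From HB Require Import structures.
From mathcomp Require Import all_boot all_order all_algebra.
From mathcomp Require Import complex.
Set Implicit Arguments. Unset Strict Implicit. Unset Printing Implicit Defensive.
Import Order.TTheory GRing.Theory Num.Theory.
Local Open Scope ring_scope.

Section Clifford.
Variables (R : rcfType) (n : nat).
Local Notation C := (R[i]).

Definition cplx_mx m p (M : 'M[R]_(m, p)) : 'M[C]_(m, p) := map_mx (fun x : R => (x%:C)%C) M.
Definition conj_vec (v : 'rV[C]_n) : 'rV[C]_n := map_mx (@conjc R) v.

Definition quad_form (Qm : 'M[R]_n) (v : 'rV[R]_n) : R := (v *m Qm *m v^T) 0 0.
Definition quad_formC (Qm : 'M[R]_n) (v : 'rV[C]_n) : C := (v *m cplx_mx Qm *m v^T) 0 0.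
Definition nondegenerate_quad (Qm : 'M[R]_n) : Prop := Qm^T = Qm /\ \det Qm != 0.

Definition alg_morph (A B : algType C) (f : A -> B) : Prop :=
  [/\ forall x y, f (x + y) = f x + f y,
      forall (z : C) x, f (z *: x) = z *: f x,
      forall x y, f (x * y) = f x * f y & f 1 = 1].

(* (A, gamma) is the complexified Clifford algebra Cl(V,Q)^C = Cl(V^C, Q^C),
   with the convention v^2 = + Q(v), given by its universal property. *)
Definition is_complex_clifford (Qm : 'M[R]_n) (A : unitAlgType C)
  (gamma : 'rV[C]_n -> A) : Prop :=
  [/\ forall (z : C) u v, gamma (z *: u + v) = z *: gamma u + gamma v,
      forall v, gamma v * gamma v = (quad_formC Qm v)%:A &
      forall (B : algType C) (f : 'rV[C]_n -> B),
        (forall (z : C) u v, f (z *: u + v) = z *: f u + f v) ->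
        (forall v, f v * f v = (quad_formC Qm v)%:A) ->
        exists g : A -> B, (alg_morph g /\ forall v, g (gamma v) = f v) /\
          forall g' : A -> B, alg_morph g' -> (forall v, g' (gamma v) = f v) ->
             forall a, g' a = g a].

Definition antilinear_morph (A : unitAlgType C) (s : A -> A) : Prop :=
  [/\ forall x y, s (x + y) = s x + s y,
      forall (z : C) x, s (z *: x) = conjc z *: s x,
      forall x y, s (x * y) = s x * s y & s 1 = 1].

(* c : complex conjugation of Cl(V)^C with respect to the real form Cl(V,Q):
   the antilinear algebra automorphism that is complex conjugation on V^C *)
Definition is_cconj (A : unitAlgType C) (gamma : 'rV[C]_n -> A) (c : A -> A) : Prop :=
  antilinear_morph c /\ forall v, c (gamma v) = gamma (conj_vec v).

Definition is_transpose (A : unitAlgType C) (gamma : 'rV[C]_n -> A) (T : A -> A) : Prop :=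
  [/\ forall x y, T (x + y) = T x + T y,
      forall (z : C) x, T (z *: x) = z *: T x,
      forall x y, T (x * y) = T y * T x, T 1 = 1 &
      forall v, T (gamma v) = gamma v].

Definition real_structure (A : unitAlgType C) (gamma : 'rV[C]_n -> A) (s : A -> A) : Prop :=
  [/\ antilinear_morph s, forall a, s (s a) = a &
      forall v, exists w, s (gamma v) = gamma w].
Definition admissible (A : unitAlgType C) (gamma : 'rV[C]_n -> A) (c s : A -> A) : Prop :=
  real_structure gamma s /\ forall a, s (c a) = c (s a).

Definition in_clifford_group (A : unitAlgType C) (gamma : 'rV[C]_n -> A) (g : A) : Prop :=
  g \is a GRing.unit /\ forall v, exists w, g * gamma v * g^-1 = gamma w.

End Clifford.

Section Forms.
Variables (R : rcfType) (d : nat).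
Local Notation C := (R[i]).
Local Notation K := ('cV[C]_d).

Definition sesquilinear (h : K -> K -> C) : Prop :=
  (forall x (z : C) y y', h x (z *: y + y') = z * h x y + h x y') /\
  (forall y (z : C) x x', h (z *: x + x') y = conjc z * h x y + h x' y).
Definition hermitian (h : K -> K -> C) : Prop :=
  sesquilinear h /\ forall x y, h y x = conjc (h x y).
Definition nondegenerate (h : K -> K -> C) : Prop :=
  forall x, (forall y, h x y = 0) -> x = 0.
Definition krein_product (h : K -> K -> C) : Prop := hermitian h /\ nondegenerate h.

Definition representation (A : unitAlgType C) (rho : A -> 'M[C]_d) : Prop :=
  [/\ forall x y, rho (x + y) = rho x + rho y,
      forall (z : C) x, rho (z *: x) = z *: rho x,
      forall x y, rho (x * y) = rho x *m rho y & rho 1 = 1%:M].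

Definition compatible (A : unitAlgType C) (rho : A -> 'M[C]_d) (dag : A -> A)
  (h : K -> K -> C) : Prop :=
  forall a psi phi, h (rho a *m psi) phi = h psi (rho (dag a) *m phi).

End Forms.

(* Main.v *)
Require Import Defs.
From HB Require Import structures.
From mathcomp Require Import all_boot all_order all_algebra.
From mathcomp Require Import complex.
Import Order.TTheory GRing.Theory Num.Theory.
Local Open Scope ring_scope.

Lemma conjc_i (R : rcfType) : conjc ('i%C : R[i]) = - 'i%C.
Proof. by apply/eqP; rewrite eq_complex /= oppr0 !eqxx. Qed.

Theorem proposition9 (R : rcfType) (n : nat) (Qm : 'M[R]_n)
  (A : unitAlgType R[i]) (gamma : 'rV[R[i]]_n -> A) (c T : A -> A)
  (d : nat) (rho : A -> 'M[R[i]]_d) (h : 'cV[R[i]]_d -> 'cV[R[i]]_d -> R[i])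
  (b : A) :
  ~~ odd n ->
  nondegenerate_quad Qm ->
  is_complex_clifford Qm gamma ->
  is_cconj gamma c ->
  is_transpose gamma T ->
  representation rho ->
  krein_product h ->
  compatible rho (fun a => c (T a)) h ->
  in_clifford_group gamma b ->
  c b = b ->
  admissible gamma c (fun a => b * c a * b^-1) ->
  (c (T b) = b ->
     let hb := fun psi phi => h psi (invmx (rho b) *m phi) in
     krein_product hb /\ compatible rho (fun a => b * c (T a) * b^-1) hb) /\
  (c (T b) = - b ->
     let hb := fun psi phi => h psi (('i%C : R[i]) *: (invmx (rho b) *m phi)) in
     krein_product hb /\ compatible rho (fun a => b * c (T a) * b^-1) hb).
Proof.
move=> _ _ _ _ _ [rD rZ rM r1] [[[hlin hanti] hherm] hnd] hcomp [bU _] _ _.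
set M := rho b.
have E : M *m rho b^-1 = 1%:M by rewrite -rM mulrV.
have MU : M \in unitmx by case: (mulmx1_unit E).
have Minv : invmx M = rho b^-1.
  by rewrite -[RHS](mulKmx MU) E mulmx1.
have h0 : forall x, h x 0 = 0.
  move=> x; have := hlin x 1 0 0; rewrite scaler0 addr0 mul1r.
  by move/esym/eqP; rewrite -subr_eq0 addrK => /eqP.
have hZ : forall x z y, h x (z *: y) = z * h x y.
  by move=> x z y; rewrite -[z *: y]addr0 hlin h0 addr0.
have hN : forall x y, h x (- y) = - h x y.
  by move=> x y; rewrite -scaleN1r hZ mulN1r.
have rN : rho (- b) = - M.
  by rewrite -scaleN1r rZ scaleN1r.
have hcompat : forall a, c (T a) = c (T a) -> True by [].
split.
- move=> cTb hb; split; first split; first split; first split.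
  + move=> x z y y'; rewrite /hb mulmxDr -scalemxAr hlin //.
  + by move=> y z x x'; rewrite /hb hanti.
  + move=> x y; rewrite /hb hherm.
    congr conjc.
    have Ey : y = rho (c (T b)) *m (invmx M *m y) by rewrite cTb mulKVmx.
    by rewrite {1}Ey -hcomp mulKVmx.
  + move=> x H; apply: hnd => y; have := H (M *m y).
    by rewrite /hb mulKmx.
  + move=> a psi phi; rewrite /hb hcomp; congr (h psi _).
    by rewrite !rM -Minv !mulmxA mulVmx // mul1mx.
- move=> cTb hb; split; first split; first split; first split.
  + move=> x z y y'; rewrite /hb mulmxDr scalerDr -scalemxAr scalerA mulrC -scalerA hlin //.
  + by move=> y z x x'; rewrite /hb hanti.
  + move=> x y.
    have key : h y (invmx M *m x) = - h (invmx M *m y) x.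
      have Ex : x = rho (c (T b)) *m (- (invmx M *m x)).
        by rewrite cTb rN mulNmx mulmxN opprK mulKVmx.
      by rewrite {2}Ex -hcomp mulKVmx // hN opprK.
    rewrite /hb !hZ key (hherm x (invmx M *m y)).
    case: (h x _) => p q; apply/eqP; rewrite eq_complex /=. by rewrite !(mul0r, mul1r, opprK, add0r, sub0r, addr0) !eqxx.
  + move=> x H; apply: hnd => y; have := H (M *m y).
    rewrite /hb mulKmx // hZ => /eqP; rewrite mulf_eq0 => /orP[|/eqP //] /eqP.
    by move=> /(congr1 (@complex.Im R)) /= /eqP; rewrite oner_eq0.
  + move=> a psi phi; rewrite /hb !hZ hcomp; congr (_ * h psi _).
    by rewrite !rM -Minv !mulmxA mulVmx // mul1mx.
Qed.
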